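(* Let $L$ be an invertible linear map of $\mathbb{C}^n$ with eigenvalues $\lambda_1,\dots,\lambda_n$ satisfying $0<|\lambda_1|<\dots<|\lambda_n|<1$. For every $r\ge 1$, \[ SR_r(L)+\mathrm{Im}(M_L^r)=\mathcal{H}^r, \] where $M_L^r:\mathcal{H}^r\to\mathcal{H}^r$ is $h\mapsto h\circ L-L\circ h$.
   Context: $E^{\lambda}(L)$ is the characteristic subspace of $L$ for the eigenvalue $\lambda$; here $\mathbb{C}^n=E^{\lambda_1}(L)\oplus\cdots\oplus E^{\lambda_n}(L)$. $\mathcal{H}^r$ is the vector space of homogeneous polynomial maps of degree $r$ from $\mathbb{C}^n$ to $\mathbb{C}^n$. A homogeneous polynomial map $Q$ with $Q(0)=0$ is of type $s=(s_1,\dots,s_n)$ if for all $a_1,\dots,a_n\in\mathbb{C}$ and $(t_1,\dots,t_n)\in E^{\lambda_1}(L)\times\cdots\times E^{\lambda_n}(L)$, $Q(a_1t_1+\dots+a_nt_n)=a_1^{s_1}\cdots a_n^{s_n}Q(t_1+\dots+t_n)$. A polynomial map $P$ with $P(0)=0$ is of sub-resonance type with respect to $L$ if for each $i$ its component $P_i:\mathbb{C}^n\to E^{\lambda_i}(L)$ consists only of homogeneous terms of types $s$ with $\ln|\lambda_i|\le\sum_j s_j\ln|\lambda_j|$. $SR_r(L)$ denotes the set of elements of $\mathcal{H}^r$ that are of sub-resonance type with respect to $L$. *)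

(* Defs.v *)
From mathcomp Require Import all_boot all_order all_algebra.
From mathcomp Require Export complex.
From mathcomp Require Export reals exp.
Set Implicit Arguments. Unset Strict Implicit. Unset Printing Implicit Defensive.
Import GRing.Theory Num.Theory.
Local Open Scope ring_scope.

Section Defs.
Variables (R : realType) (n : nat).
Local Notation C := (R[i]).
Local Notation V := ('cV[C]_n).

Definition cmod (z : C) : R := Normc.normc z.

Definition is_hpoly (r : nat) (f : V -> V) : Prop :=
  exists c : {ffun 'I_n -> 'I_r.+1} -> V,
    forall x : V,
      f x = \sum_(a : {ffun 'I_n -> 'I_r.+1} | (\sum_(j < n) (a j : nat))%N == r)
              (\prod_(j < n) (x j 0) ^+ (a j)) *: c a.

Definition charsp (L : 'M[C]_n) (lam : C) (x : V) : Prop :=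
  ((L - lam%:M) ^+ n) *m x = 0.

Definition is_of_type (L : 'M[C]_n) (lam : 'I_n -> C) (s : 'I_n -> nat)
    (Q : V -> V) : Prop :=
  forall (a : 'I_n -> C) (t : 'I_n -> V),
    (forall j, charsp L (lam j) (t j)) ->
    Q (\sum_(j < n) a j *: t j) = (\prod_(j < n) a j ^+ s j) *: Q (\sum_(j < n) t j).

Definition sub_resonance (L : 'M[C]_n) (lam : 'I_n -> C) (P : V -> V) : Prop :=
  P 0 = 0 /\
  exists (m : nat) (s : 'I_n -> 'I_m -> 'I_n -> nat) (Q : 'I_n -> 'I_m -> V -> V),
    (forall i k,
        (exists d, is_hpoly d (Q i k)) /\ Q i k 0 = 0 /\
        (forall x, charsp L (lam i) (Q i k x)) /\
        is_of_type L lam (s i k) (Q i k) /\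
        ln (cmod (lam i)) <= \sum_(j < n) (s i k j)%:R * ln (cmod (lam j))) /\
    forall x, P x = \sum_(i < n) \sum_(k < m) Q i k x.

Definition SR (L : 'M[C]_n) (lam : 'I_n -> C) (r : nat) (P : V -> V) : Prop :=
  is_hpoly r P /\ sub_resonance L lam P.

Definition ML (L : 'M[C]_n) (h : V -> V) : V -> V :=
  fun x => h (L *m x) - L *m h x.

End Defs.

(* Main.v *)
Set Warnings "-all".
Require Import Defs.
From mathcomp Require Import all_boot all_order all_algebra.
From mathcomp Require Import complex reals exp.
From mathcomp Require Import ring.
Import GRing.Theory Num.Theory.
Local Open Scope ring_scope.
Set Implicit Arguments. Unset Strict Implicit. Unset Printing Implicit Defensive.

Section Hom.
Variables (R : realType) (n : nat).
Local Notation C := (R[i]).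
Local Notation V := ('cV[C]_n).

Definition mono (a : 'I_n -> nat) (x : V) : C := \prod_j (x j 0) ^+ a j.

Definition hom (d : nat) (g : V -> C) : Prop :=
  exists (I : finType) (c : I -> C) (a : I -> 'I_n -> nat),
    (forall k, (\sum_j a k j)%N = d) /\ forall x, g x = \sum_k c k * mono (a k) x.

Definition homM (d : nat) (f : V -> V) : Prop :=
  exists (I : finType) (v : I -> V) (a : I -> 'I_n -> nat),
    (forall k, (\sum_j a k j)%N = d) /\ forall x, f x = \sum_k mono (a k) x *: v k.

Lemma hom_ext d g g' : hom d g -> (forall x, g x = g' x) -> hom d g'.
Proof. move=> [I [c [a [Ha Hg]]]] E; exists I, c, a; split=> // x; by rewrite -E. Qed.

Lemma homM_ext d g g' : homM d g -> (forall x, g x = g' x) -> homM d g'.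
Proof. move=> [I [c [a [Ha Hg]]]] E; exists I, c, a; split=> // x; by rewrite -E. Qed.

Lemma hom0 d : hom d (fun _ => 0).
Proof.
exists 'I_0, (fun _ => 0), (fun _ _ => 0%N); split; first by case.
by move=> x; rewrite big_ord0.
Qed.

Lemma homM0 d : homM d (fun _ => 0).
Proof.
exists 'I_0, (fun _ => 0), (fun _ _ => 0%N); split; first by case.
by move=> x; rewrite big_ord0.
Qed.

Lemma homD d g1 g2 : hom d g1 -> hom d g2 -> hom d (fun x => g1 x + g2 x).
Proof.
move=> [I1 [c1 [a1 [Ha1 H1]]]] [I2 [c2 [a2 [Ha2 H2]]]].
exists (I1 + I2)%type, (fun k => match k with inl k => c1 k | inr k => c2 k end),
  (fun k => match k with inl k => a1 k | inr k => a2 k end); split.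
  by case.
by move=> x; rewrite big_sumType /= H1 H2.
Qed.

Lemma homMD d g1 g2 : homM d g1 -> homM d g2 -> homM d (fun x => g1 x + g2 x).
Proof.
move=> [I1 [c1 [a1 [Ha1 H1]]]] [I2 [c2 [a2 [Ha2 H2]]]].
exists (I1 + I2)%type, (fun k => match k with inl k => c1 k | inr k => c2 k end),
  (fun k => match k with inl k => a1 k | inr k => a2 k end); split.
  by case.
by move=> x; rewrite big_sumType /= H1 H2.
Qed.

Lemma homMN d g : homM d g -> homM d (fun x => - g x).
Proof.
move=> [I [c [a [Ha H]]]]; exists I, (fun k => - c k), a; split=> // x.
by rewrite H -sumrN; apply: eq_bigr => k _; rewrite scalerN.
Qed.

Lemma hom_sum d (J : Type) (s : seq J) (F : J -> V -> C) :
  (forall j, hom d (F j)) -> hom d (fun x => \sum_(j <- s) F j x).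
Proof.
move=> H; elim: s => [|j s IH].
  by eapply hom_ext; [exact: (hom0 d)| move=> x]; rewrite big_nil.
by eapply hom_ext; [exact: (homD (H j) IH)| move=> x]; rewrite big_cons.
Qed.

Lemma homM_sum d (J : Type) (s : seq J) (F : J -> V -> V) :
  (forall j, homM d (F j)) -> homM d (fun x => \sum_(j <- s) F j x).
Proof.
move=> H; elim: s => [|j s IH].
  by eapply homM_ext; [exact: (homM0 d)| move=> x]; rewrite big_nil.
by eapply homM_ext; [exact: (homMD (H j) IH)| move=> x]; rewrite big_cons.
Qed.

Lemma homZ d g (al : C) : hom d g -> hom d (fun x => al * g x).
Proof.
move=> [I [c [a [Ha H]]]]; exists I, (fun k => al * c k), a; split=> // x.
by rewrite H mulr_sumr; apply: eq_bigr => k _; rewrite mulrA.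
Qed.

Lemma monoD a b x : mono (fun j => (a j + b j)%N) x = mono a x * mono b x.
Proof. by rewrite /mono -big_split /=; apply: eq_bigr => j _; rewrite exprD. Qed.

Lemma homMul d1 d2 g1 g2 : hom d1 g1 -> hom d2 g2 ->
  hom (d1 + d2) (fun x => g1 x * g2 x).
Proof.
move=> [I1 [c1 [a1 [Ha1 H1]]]] [I2 [c2 [a2 [Ha2 H2]]]].
exists (I1 * I2)%type, (fun k => c1 k.1 * c2 k.2),
  (fun k j => (a1 k.1 j + a2 k.2 j)%N); split.
  by move=> k; rewrite big_split /= Ha1 Ha2.
move=> x; rewrite H1 H2 big_distrlr /= pair_bigA /=; apply: eq_bigr => k _.
by rewrite monoD mulrACA.
Qed.

Lemma hom1 : hom 0 (fun _ => 1).
Proof.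
exists 'I_1, (fun _ => 1), (fun _ _ => 0%N); split.
  by move=> _; rewrite big1.
move=> x; rewrite big_ord1 mul1r /mono big1 // => j _; exact: expr0.
Qed.

Lemma hom_coord j : hom 1 (fun x => x j 0).
Proof.
exists 'I_1, (fun _ => 1), (fun _ k => (k == j) : nat); split.
  by move=> _; rewrite (bigD1 j) //= eqxx big1 // => k /negbTE ->.
move=> x; rewrite big_ord1 mul1r /mono (bigD1 j) //= eqxx expr1 big1 ?mulr1 //.
by move=> k /negbTE ->; rewrite expr0.
Qed.

Lemma hom_pow d g e : hom d g -> hom (d * e) (fun x => g x ^+ e).
Proof.
move=> H; elim: e => [|e IH].
  by rewrite muln0; eapply hom_ext; [exact: hom1| move=> x]; rewrite expr0.
by rewrite mulnS; eapply hom_ext; [exact: (homMul H IH)| move=> x]; rewrite exprS.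
Qed.

Lemma hom_prod (J : Type) (s : seq J) (F : J -> V -> C) (e : J -> nat) :
  (forall j, hom (e j) (F j)) ->
  hom (\sum_(j <- s) e j)%N (fun x => \prod_(j <- s) F j x).
Proof.
move=> H; elim: s => [|j s IH].
  by rewrite big_nil; eapply hom_ext; [exact: hom1| move=> x]; rewrite big_nil.
by rewrite big_cons; eapply hom_ext; [exact: (homMul (H j) IH)| move=> x]; rewrite big_cons.
Qed.

Lemma hom_lin (A : 'M[C]_n) j : hom 1 (fun x => (A *m x) j 0).
Proof.
have := hom_sum (index_enum 'I_n) (F := fun k x => A j k * x k 0)
   (fun k => homZ (A j k) (hom_coord k)).
move=> H; eapply hom_ext; [exact: H| move=> x]; by rewrite mxE.
Qed.

Lemma hom_mono_lin (A : 'M[C]_n) a :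
  hom (\sum_j a j)%N (fun x => mono a (A *m x)).
Proof.
have := hom_prod (index_enum 'I_n) (e := a)
   (F := fun j x => (A *m x) j 0 ^+ a j).
move=> H; apply: H => j; have := hom_pow (a j) (hom_lin A j); by rewrite mul1n.
Qed.

Lemma homM_scal d g (v : V) : hom d g -> homM d (fun x => g x *: v).
Proof.
move=> [I [c [a [Ha H]]]]; exists I, (fun k => c k *: v), a; split=> // x.
by rewrite H scaler_suml; apply: eq_bigr => k _; rewrite scalerA mulrC.
Qed.

Lemma homM_post d f (A : 'M[C]_n) : homM d f -> homM d (fun x => A *m f x).
Proof.
move=> [I [c [a [Ha H]]]]; exists I, (fun k => A *m c k), a; split=> // x.
by rewrite H mulmx_sumr; apply: eq_bigr => k _; rewrite scalemxAr.
Qed.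

Lemma homM_pre d f (A : 'M[C]_n) : homM d f -> homM d (fun x => f (A *m x)).
Proof.
move=> [I [c [a [Ha H]]]].
have := homM_sum (index_enum I) (F := fun k x => mono (a k) (A *m x) *: c k).
move=> H2; eapply homM_ext; [apply: H2 => k| move=> x; by rewrite H].
all: by rewrite -(Ha k); apply: homM_scal; apply: hom_mono_lin.
Qed.


Lemma hpoly_homM r f : is_hpoly r f -> homM r f.
Proof.
move=> [c Hc].
have := homM_sum (index_enum {ffun 'I_n -> 'I_r.+1}) (d := r)
  (F := fun a x => if (\sum_(j < n) (a j : nat))%N == r
                   then mono (fun j => a j) x *: c a else 0).
move=> H; eapply homM_ext; first apply: H => a.
  2: by move=> x; rewrite Hc [RHS]big_mkcond.
case Ha: (_ == r); last exact: homM0.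
exists 'I_1, (fun _ => c a), (fun _ j => (a j : nat)); split; first by move=> _; apply/eqP.
by move=> x; rewrite big_ord1.
Qed.

Lemma exp_le d (a : 'I_n -> nat) j : (\sum_j a j)%N = d -> (a j < d.+1)%N.
Proof. by move=> <-; rewrite ltnS (bigD1 j) //= leq_addr. Qed.

Lemma homM_hpoly r f : homM r f -> is_hpoly r f.
Proof.
move=> [I [v [a [Ha H]]]].
pose tof k : {ffun 'I_n -> 'I_r.+1} := [ffun j => inord (a k j)].
have tofE k j : (tof k j : nat) = a k j by rewrite ffunE inordK // exp_le.
exists (fun b => \sum_(k | tof k == b) v k) => x.
rewrite H (partition_big tof (fun b : {ffun 'I_n -> 'I_r.+1} => (\sum_(j < n) (b j : nat))%N == r)).
  apply: eq_bigr => b _; rewrite scaler_sumr; apply: eq_bigr => k /eqP <-.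
  by congr (_ *: _); apply: eq_bigr => j _; rewrite tofE.
move=> k _; apply/eqP; transitivity (\sum_j a k j)%N; last exact: Ha.
by apply: eq_bigr => j _; rewrite tofE.
Qed.

End Hom.

Section Extra.
Variables (R : realType) (n : nat).
Local Notation C := (R[i]).
Local Notation V := ('cV[C]_n).

Lemma homM_ord d (f : V -> V) : homM d f ->
  exists m (v : 'I_m -> V) (a : 'I_m -> 'I_n -> nat),
    (forall k, (\sum_j a k j)%N = d) /\ forall x, f x = \sum_(k < m) mono (a k) x *: v k.
Proof.
move=> [I [v [a [Ha H]]]].
exists #|I|, (fun k => v (enum_val k)), (fun k => a (enum_val k)); split => // x.
rewrite H; transitivity (\sum_(k in I) mono (a k) x *: v k).
  by apply: eq_bigl => k; rewrite inE.
by rewrite big_enum_val.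
Qed.

Lemma homM_sum2 d m (F : 'I_n -> 'I_m -> V -> V) :
  (forall i l, homM d (F i l)) -> homM d (fun x => \sum_(i < n) \sum_(l < m) F i l x).
Proof.
move=> H; apply: (homM_sum (index_enum 'I_n) (F := fun i x => \sum_(l < m) F i l x)) => i.
by apply: (homM_sum (index_enum 'I_m) (F := fun l x => F i l x)).
Qed.

Lemma homM_term d (A : 'M[C]_n) a (K : C) (v : V) : (\sum_j a j)%N = d ->
  homM d (fun x => (K * mono a (A *m x)) *: v).
Proof. by move=> <-; apply: homM_scal; apply: homZ; apply: hom_mono_lin. Qed.

Lemma mono0 (a : 'I_n -> nat) : (0 < \sum_j a j)%N -> mono a (0 : V) = 0.
Proof.
move=> H; have [j Hj] : exists j, (0 < a j)%N.
  apply/existsP; apply: contraLR H; rewrite negb_exists => /forallP Ha.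
  by rewrite -leqNgt leqn0 big1 // => j _; apply/eqP; rewrite -leqn0 leqNgt Ha.
rewrite /mono (bigD1 j) //= mxE expr0n.
rewrite (_ : (a j == 0%N) = false) ?mul0r //; by move: Hj; case: (a j).
Qed.

Lemma pow_kill (A : 'M[C]_n) (z : V) e : (0 < e)%N -> A *m z = 0 -> A ^+ e *m z = 0.
Proof. by case: e => // e _ H; rewrite exprSr -mulmxE -mulmxA H mulmx0. Qed.

Lemma cmodX (x : C) e : cmod (x ^+ e) = cmod x ^+ e.
Proof.
rewrite /cmod /=; elim: e => [|e IH]; first by rewrite !expr0 Normc.normc1.
by rewrite !exprS Normc.normcM IH.
Qed.

Lemma cmod_prod (J : Type) (s : seq J) (F : J -> C) :
  cmod (\prod_(j <- s) F j) = \prod_(j <- s) cmod (F j).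
Proof.
rewrite /cmod /=; elim: s => [|j s IH]; first by rewrite !big_nil Normc.normc1.
by rewrite !big_cons Normc.normcM IH.
Qed.

Lemma ln_prod (J : Type) (s : seq J) (c : J -> R) (e : J -> nat) :
  (forall j, 0 < c j) ->
  ln (\prod_(j <- s) c j ^+ e j) = \sum_(j <- s) (e j)%:R * ln (c j).
Proof.
move=> Hc; elim: s => [|j s IH]; first by rewrite !big_nil ln1.
rewrite !big_cons lnM ?posrE ?exprn_gt0 ?prodr_gt0 // => [|k _]; last exact: exprn_gt0.
by rewrite IH lnXn // mulr_natl.
Qed.

End Extra.

Lemma eig_exists (R : realType) n (L : 'M[R[i]]_n) lam :
  char_poly L = \prod_(j < n) ('X - (lam j)%:P) ->
  forall j, exists2 u : 'rV_n, u *m L = lam j *: u & u != 0.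
Proof.
move=> Hc j; apply/eigenvalueP; rewrite eigenvalue_root_char Hc.
rewrite /root horner_prod (bigD1 j) //= hornerXsubC subrr mul0r.
by [].
Qed.

Section Eig.
Variables (R : realType) (n : nat) (L : 'M[R[i]]_n) (lam : 'I_n -> R[i]) (u : 'I_n -> 'rV[R[i]]_n).
Hypothesis lam_inj : forall j k, j != k -> lam j != lam k.
Hypothesis Hu : forall j, u j *m L = lam j *: u j.
Hypothesis Hnz : forall j, u j != 0.

Lemma eig_prod (w : 'rV[R[i]]_n) mu : w *m L = mu *: w ->
  forall (s : seq 'I_n) (P : pred 'I_n),
  w *m \prod_(k <- s | P k) (L - (lam k)%:M) = (\prod_(k <- s | P k) (mu - lam k)) *: w.
Proof.
move=> Hw s P; elim: s => [|k s IH].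
  by rewrite !big_nil -idmxE mulmx1 scale1r.
rewrite !big_cons; case: (P k) => //.
rewrite -mulmxE mulmxA mulmxBr Hw mul_mx_scalar -scalerBl -scalemxAl IH scalerA.
by [].
Qed.

Definition Umx := \matrix_(j, k) u j 0 k.

Lemma rowU j : row j Umx = u j.
Proof. by apply/rowP => k; rewrite !mxE. Qed.

Lemma indep (y : 'rV[R[i]]_n) : y *m Umx = 0 -> y = 0.
Proof.
move=> Hy; apply/rowP => j; rewrite mxE.
have := congr1 (fun M => M *m \prod_(k < n | k != j) (L - (lam k)%:M)) Hy.
rewrite /=; set Pr := \prod_(k < n | k != j) _.
rewrite mul0mx (mulmx_sum_row y) mulmx_suml (bigD1 j) //= big1; last first.
  move=> k Hk; rewrite rowU -scalemxAl /Pr (eig_prod (Hu k)) (bigD1 k) //= subrr mul0r.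
  by rewrite !scale0r scaler0.
rewrite addr0 rowU -scalemxAl /Pr (eig_prod (Hu j)) scalerA => /eqP.
rewrite scaler_eq0 (negbTE (Hnz j)) orbF mulf_eq0 => /orP [/eqP //|].
move=> H; exfalso; move: H; apply/negP/prodf_neq0 => k Hk.
by rewrite subr_eq0 eq_sym lam_inj.
Qed.

Lemma U_unit : Umx \in unitmx.
Proof.
rewrite -row_free_unit -kermx_eq0; apply/eqP; apply/row_matrixP => i.
rewrite row0; apply: indep; by rewrite -row_mul mulmx_ker row0.
Qed.

Lemma rowE m (M : 'M[R[i]]_(n, m)) (x : 'M[R[i]]_(m, 1)) k : (M *m x) k 0 = (row k M *m x) 0 0.
Proof. by rewrite -row_mul [RHS]mxE. Qed.

Lemma UL (x : 'cV[R[i]]_n) k : (Umx *m (L *m x)) k 0 = lam k * (Umx *m x) k 0.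
Proof.
by rewrite mulmxA (rowE (Umx *m L)) (rowE Umx) row_mul rowU Hu -scalemxAl mxE.
Qed.

Definition Pmx := invmx Umx.

Lemma U_decomp (x : 'cV[R[i]]_n) : x = \sum_j (Umx *m x) j 0 *: col j Pmx.
Proof.
rewrite -{1}(mulKmx U_unit x) -/Pmx; apply/matrixP => i m.
rewrite !mxE summxE; apply: eq_bigr => j _; rewrite !mxE (ord1 m) mulrC.
by [].
Qed.

Lemma Uv i k : (Umx *m col i Pmx) k 0 = (k == i)%:R.
Proof.
have := congr1 (fun M : 'M[R[i]]_n => M k i) (mulmxV U_unit); rewrite /= !mxE => <-.
by apply: eq_bigr => m _; rewrite !mxE.
Qed.

Lemma Lv i : L *m col i Pmx = lam i *: col i Pmx.
Proof.
rewrite -[LHS](mulKmx U_unit) -[RHS](mulKmx U_unit); congr (_ *m _).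
apply/matrixP => k m; rewrite (ord1 m) UL -scalemxAr [RHS]mxE !Uv.
by case: (k =P i) => [->|]; rewrite ?mulr0.
Qed.

Lemma ULc (c : R[i]) (z : 'cV[R[i]]_n) k :
  (Umx *m ((L - c%:M) *m z)) k 0 = (lam k - c) * (Umx *m z) k 0.
Proof.
rewrite mulmxBl mul_scalar_mx mulmxBr mxE UL -scalemxAr.
by rewrite [X in _ + X]mxE [X in - X]mxE mulrBl.
Qed.

Lemma charsp_coord j (t : 'cV[R[i]]_n) : charsp L (lam j) t -> forall k, k != j -> (Umx *m t) k 0 = 0.
Proof.
move=> Ht k Hk.
have E e (w : 'cV[R[i]]_n) : (Umx *m ((L - (lam j)%:M)^+e *m w)) k 0 = (lam k - lam j)^+e * (Umx *m w) k 0.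
  elim: e => [|e IH]; first by rewrite expr0 -idmxE mul1mx mul1r.
  by rewrite exprS -mulmxE -mulmxA ULc IH exprS mulrA.
move: (E n t); rewrite Ht mulmx0 mxE => /esym/eqP.
rewrite mulf_eq0 expf_eq0 subr_eq0 (negbTE (lam_inj Hk)) andbF /= => /eqP //.
Qed.

Lemma coord_sum (b : 'I_n -> R[i]) (t : 'I_n -> 'cV[R[i]]_n) :
  (forall j, charsp L (lam j) (t j)) ->
  forall k, (Umx *m \sum_j b j *: t j) k 0 = b k * (Umx *m t k) k 0.
Proof.
move=> Ht k; rewrite mulmx_sumr summxE (bigD1 k) //= big1 ?addr0.
  by rewrite -scalemxAr mxE.
by move=> j Hj; rewrite -scalemxAr mxE (charsp_coord (Ht j)) ?mulr0 // eq_sym.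
Qed.

End Eig.

Theorem proposition3p8 (R : realType) (n : nat) (L : 'M[R[i]]_n)
    (lam : 'I_n -> R[i]) :
  L \in unitmx ->
  char_poly L = \prod_(j < n) ('X - (lam j)%:P) ->
  (forall j, 0 < cmod (lam j)) ->
  (forall j k : 'I_n, (j < k)%N -> cmod (lam j) < cmod (lam k)) ->
  (forall j, cmod (lam j) < 1) ->
  forall r : nat, (1 <= r)%N ->
  forall f : 'cV[R[i]]_n -> 'cV[R[i]]_n,
    is_hpoly r f <->
    exists p h : 'cV[R[i]]_n -> 'cV[R[i]]_n,
      SR L lam r p /\ is_hpoly r h /\ (forall x, f x = p x + ML L h x).
Proof.
move=> Lu Hc Hpos Hord Hlt1 r Hr f; split; last first.
  move=> [p [h [[Hp _] [Hh Hf]]]].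
  have H1 : homM r (fun x => p x + (h (L *m x) - L *m h x)).
    apply: (homMD (g1 := p) (g2 := fun x => h (L *m x) - L *m h x)).
      exact: hpoly_homM.
    apply: (homMD (g1 := fun x => h (L *m x)) (g2 := fun x => - (L *m h x))).
      exact: homM_pre (hpoly_homM Hh).
    exact: homMN (homM_post L (hpoly_homM Hh)).
  by apply: homM_hpoly; eapply homM_ext; [exact: H1| move=> x; rewrite Hf].
move=> Hf.
have lam_inj : forall j k : 'I_n, j != k -> lam j != lam k.
  move=> j k Hjk; apply/eqP => E; case: (ltngtP j k) => H.
  - by have := Hord _ _ H; rewrite E Order.POrderTheory.ltxx.
  - by have := Hord _ _ H; rewrite E Order.POrderTheory.ltxx.
  - by move/eqP: Hjk; apply; apply: val_inj.
have [u Hu Hnz] := fin_all_exists2 (eig_exists Hc).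
have Uu := U_unit lam_inj Hu Hnz.
set U := Umx u; set P := Pmx u.
have [m [w [a [Ha Hg]]]] := homM_ord (homM_pre P (hpoly_homM Hf)).
have fE x : f x = \sum_(l < m) mono (a l) (U *m x) *: w l.
  by rewrite -Hg /P /Pmx mulKmx.
pose coef l i := (U *m w l) i 0.
pose mu l := \prod_j lam j ^+ a l j.
pose res l i := mu l == lam i.
pose Qf i l x := (((res l i)%:R * coef l i) * mono (a l) (U *m x)) *: col i P.
pose p x := \sum_(i < n) \sum_(l < m) Qf i l x.
pose h x := \sum_(i < n) \sum_(l < m)
   (((~~ res l i)%:R * (coef l i / (mu l - lam i))) * mono (a l) (U *m x)) *: col i P.
have monoUL l x : mono (a l) (U *m (L *m x)) = mu l * mono (a l) (U *m x).
  by rewrite /mono /mu -big_split /=; apply: eq_bigr => j _; rewrite (UL Hu) exprMn.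
have fexp x : f x = \sum_(i < n) \sum_(l < m) (coef l i * mono (a l) (U *m x)) *: col i P.
  rewrite fE exchange_big /=; apply: eq_bigr => l _.
  rewrite {1}(U_decomp lam_inj Hu Hnz (w l)) scaler_sumr; apply: eq_bigr => i _.
  by rewrite scalerA mulrC.
exists p, h; split; [split|split].
- apply: homM_hpoly; apply: homM_sum2 => i l; exact: homM_term.
- split.
    rewrite /p big1 // => i _; rewrite big1 // => l _.
    by rewrite /Qf mulmx0 mono0 ?Ha // mulr0 scale0r.
  exists m, (fun i l => if res l i then a l else (fun j => (j == i) : nat)), Qf.
  split => // i l; split; [|split; [|split; [|split]]].
  + exists r; apply: homM_hpoly; exact: homM_term.
  + by rewrite /Qf mulmx0 mono0 ?Ha // mulr0 scale0r.
  + move=> x; rewrite /charsp /Qf -scalemxAr pow_kill ?scaler0 //.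
      exact: (leq_ltn_trans (leq0n i) (ltn_ord i)).
    by rewrite mulmxBl (Lv lam_inj Hu Hnz) mul_scalar_mx subrr.
  + move=> al t Ht.
    have Hm : forall b : 'I_n -> R[i], mono (a l) (U *m \sum_j b j *: t j)
        = \prod_j b j ^+ a l j * mono (a l) (U *m \sum_j t j).
      move=> b; have -> : \sum_j t j = \sum_j 1 *: t j.
        by apply: eq_bigr => j _; rewrite scale1r.
      rewrite /mono -big_split /=; apply: eq_bigr => j _.
      by rewrite !(coord_sum lam_inj Hu _ Ht) mul1r exprMn.
    rewrite /Qf /res; case: (mu l == lam i) => /=.
      by rewrite Hm scalerA; congr (_ *: _); ring.
    by rewrite !mul0r !scale0r scaler0.
  + rewrite /res; case E: (mu l == lam i) => /=.
      rewrite -(eqP E) /mu cmod_prod.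
      under eq_bigr do rewrite cmodX.
      by rewrite ln_prod.
    rewrite (bigD1 i) //= eqxx mul1r big1 ?addr0 // => j /negbTE ->.
    by rewrite mul0r.
- apply: homM_hpoly; apply: homM_sum2 => i l; exact: homM_term.
- move=> x; rewrite fexp /p /ML /h mulmx_sumr -sumrB -big_split /=.
  apply: eq_bigr => i _; rewrite mulmx_sumr -sumrB -big_split /=.
  apply: eq_bigr => l _; rewrite /Qf -scalemxAr (Lv lam_inj Hu Hnz) scalerA.
  rewrite -scalerBl -scalerDl monoUL; congr (_ *: _).
  rewrite /res; case E: (mu l == lam i) => /=; first by ring.
  have Hne : mu l - lam i != 0 by rewrite subr_eq0 E.
  rewrite !mul1r; field; exact: Hne.
Qed.
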